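(* For integers $N\ge 2$ and $n\ge 1$, $$B_{N,n}=\frac{N}{N+n}\left\{B_{N-1,n}+\sum_{m=1}^{n-1}\binom{n}{n-m+1}B_{N,m}B_{N-1,n-m+1}\right\}.$$
   Context: For a positive integer $N$, the hypergeometric Bernoulli numbers $B_{N,n}$ ($n\ge 0$) are defined by $$\frac{x^N/N!}{e^x-\sum_{n=0}^{N-1}x^n/n!}=\sum_{n=0}^\infty B_{N,n}\frac{x^n}{n!}.$$ *)

(* Defs.v *)
From mathcomp Require Import all_boot all_order all_algebra.
Set Implicit Arguments. Unset Strict Implicit. Unset Printing Implicit Defensive.
Import Order.TTheory GRing.Theory Num.Theory.
Local Open Scope ring_scope.

(* Coefficient of x^i in  e^x - \sum_{n=0}^{N-1} x^n/n!. *)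
Definition hg_denom_coef (N i : nat) : rat :=
  (i`!%:R)^-1 - (if (i < N)%N then (i`!%:R)^-1 else 0).

Definition hg_num_coef (N m : nat) : rat := (m == N)%:R / (N`!%:R).

(* [is_hgBernoulli B] : for every N >= 1, the formal power series identity
     x^N/N! = (e^x - \sum_{n<N} x^n/n!) * \sum_n B N n x^n/n!
   holds coefficientwise, i.e. B N n are the hypergeometric Bernoulli
   numbers B_{N,n} (they are uniquely determined by this identity). *)
Definition is_hgBernoulli (B : nat -> nat -> rat) : Prop :=
  forall N : nat, (1 <= N)%N ->
    forall m : nat,
      \sum_(i < m.+1) hg_denom_coef N i * (B N (m - i)%N / ((m - i)`!)%:R)
      = hg_num_coef N m.

(* Main.v *)
Require Import Defs.
From mathcomp Require Import all_boot all_order all_algebra ring zify.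
Import Order.TTheory GRing.Theory Num.Theory.
Local Open Scope ring_scope.
Set Implicit Arguments. Unset Strict Implicit.

Definition small (K : nat) (p : {poly rat}) := forall i, (i < K)%N -> p`_i = 0.

Lemma smallD K p q : small K p -> small K q -> small K (p + q).
Proof. by move=> hp hq i hi; rewrite coefD hp ?hq ?addr0. Qed.
Lemma smallN K p : small K p -> small K (- p).
Proof. by move=> hp i hi; rewrite coefN hp ?oppr0. Qed.
Lemma smallB K p q : small K p -> small K q -> small K (p - q).
Proof. by move=> hp hq; apply: smallD => //; apply: smallN. Qed.
Lemma smallMr K p q : small K p -> small K (q * p).
Proof.
move=> hp i hi; rewrite coefM big1 // => j _; rewrite hp ?mulr0 //.
by apply: leq_ltn_trans hi; apply: leq_subr.
Qed.
Lemma smallMl K p q : small K p -> small K (p * q).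
Proof. by move=> hp; rewrite mulrC; apply: smallMr. Qed.
Lemma smallW K K' p : (K' <= K)%N -> small K p -> small K' p.
Proof. by move=> hK hp i hi; apply: hp; apply: leq_trans hK. Qed.
Lemma small_deriv K p : small K p -> small K.-1 p^`().
Proof.
move=> hp i hi; rewrite coef_deriv hp ?mul0rn //.
by move: hi; case: K {hp}.
Qed.
Lemma small_cancel K (p q : {poly rat}) : q`_0 != 0 -> small K (p * q) -> small K p.
Proof.
move=> hq hpq j; elim/ltn_ind: j => j IH hjK.
have := hpq j hjK; rewrite coefMr big_ord_recl subn0 big1 ?addr0.
  by move/eqP; rewrite mulf_eq0 (negbTE hq) orbF => /eqP.
move=> k _; rewrite IH ?mul0r //.
  by have := ltn_ord k; rewrite -/(nat_of_ord (lift ord0 k)) lift0; lia.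
by apply: leq_ltn_trans hjK; apply: leq_subr.
Qed.
Lemma hgcoef (B : nat -> nat -> rat) (hB : is_hgBernoulli B) M (hM : (1 <= M)%N) K i (hi : (i < K)%N) :
 ((\poly_(j < K) (B M j / j`!%:R)) * \poly_(j < K) ((M + j)`!%:R)^-1)`_i = (i == 0)%:R / M`!%:R.
Proof.
have := hB M hM (M + i)%N; rewrite -addnS big_split_ord /= big1 ?add0r; last first.
  by move=> l _; rewrite /hg_denom_coef /= ltn_ord subrr mul0r.
have -> : hg_num_coef M (M + i)%N = (i == 0)%:R / M`!%:R.
  by rewrite /hg_num_coef; congr (_%:R / _); apply/eqP; case: (i =P 0) => h; lia.
move=> <-; rewrite coefMr; apply: eq_bigr => k _.
rewrite !coef_poly /hg_denom_coef /=.
have hk := ltn_ord k.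
have -> : (i - k < K)%N by lia.
have -> : (k < K)%N by lia.
have -> : (M + k < M)%N = false by lia.
by rewrite subr0 subnDl mulrC.
Qed.
Theorem lemma2 (B : nat -> nat -> rat) (hB : is_hgBernoulli B)
  (N n : nat) (hN : (2 <= N)%N) (hn : (1 <= n)%N) :
  B N n = N%:R / (N + n)%:R *
    (B N.-1 n +
     \sum_(1 <= m < n) 'C(n, n - m + 1)%:R * B N m * B N.-1 (n - m + 1)%N).
Proof.
set K := n.+2.
pose b i := B N i / i`!%:R.
pose c i := B N.-1 i / i`!%:R.
pose G := \poly_(i < K) b i.
pose C := \poly_(i < K) c i.
pose f := \poly_(i < K) ((N + i)`!%:R)^-1 : {poly rat}.
pose e := \poly_(i < K) ((N.-1 + i)`!%:R)^-1 : {poly rat}.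
pose g0 := (N`!%:R)^-1 : rat.
pose c0 := (N.-1`!%:R)^-1 : rat.
have hN1 : (1 <= N.-1)%N by lia.
have hGf : forall i, (i < K)%N -> (G * f)`_i = (i == 0)%:R * g0.
  by move=> i hi; rewrite (hgcoef hB (_ : 1 <= N)%N hi) //; lia.
have hCe : forall i, (i < K)%N -> (C * e)`_i = (i == 0)%:R * c0.
  by move=> i hi; rewrite (hgcoef hB hN1 hi) // prednK //; lia.
pose r1 := G * f - g0%:P.
pose r2 := C * e - c0%:P.
pose r3 := e - c0%:P - 'X * f.
pose r4 := (N%:R)%:P * f + 'X * f^`() - e.
pose r1' := G^`() * f + G * f^`().
have s1 : small K r1.
  by move=> i hi; rewrite coefB hGf // coefC; case: (i == 0); rewrite ?mul1r ?mul0r subrr.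
have s2 : small K r2.
  by move=> i hi; rewrite coefB hCe // coefC; case: (i == 0); rewrite ?mul1r ?mul0r subrr.
have s3 : small K r3.
  move=> i hi; rewrite !coefB coefC coefXM !coef_poly hi.
  case: i hi => [|i] hi /=; first by rewrite addn0 subrr subr0.
  have -> : (i < K)%N by lia.
  have -> : (N.-1 + i.+1 = N + i)%N by lia.
  by rewrite !subr0 subrr.
have s1' : small K.-1 r1'.
  have := small_deriv s1; rewrite /r1 derivB derivC subr0 derivM //.
have hXd : forall i, ('X * f^`())`_i = f`_i *+ i.
  by case=> [|i]; rewrite coefXM /= ?coef_deriv ?mulr0n.
have s4 : small K r4.
  move=> i hi; rewrite coefB coefD coefCM hXd !coef_poly hi.
  have -> : (N + i)%N = (N.-1 + i).+1 by lia.
  rewrite factS natrM -mulr_natr.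
  have h1 : ((N.-1+i)`!%:R : rat) != 0 by rewrite pnatr_eq0 -lt0n fact_gt0.
  have h2 : ((N.-1+i).+1%:R : rat) != 0 by rewrite pnatr_eq0.
  rewrite (_ : (N%:R : rat) = (N.-1+i).+1%:R - i%:R).
    rewrite -[_ *+ i]mulr_natr; field; rewrite h1 /=.
    by rewrite (_ : 1 + _ = (N.-1+i).+1%:R :> rat) // mulrSr -natrD addrC.
  by apply/eqP; rewrite eq_sym subr_eq -natrD; apply/eqP; congr _%:R; lia.
pose H := G - C - G^`() * (C - 1).
have hid : H * (f * e) = r1*e - r2*f - G^`()*f*r2 + G^`()*f*r3 + 'X*f*r1' - 'X*f^`()*r1 - g0%:P*r4 + (g0%:P*(N%:R)%:P - c0%:P)*f.
  rewrite /H /r1 /r2 /r3 /r4 /r1'; ring.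
have hc : g0%:P*(N%:R)%:P - c0%:P = 0.
  rewrite -polyCM; apply/eqP; rewrite subr_eq0; apply/eqP; congr _%:P.
  have [M eN] : exists M, N = M.+1 by exists N.-1; lia.
  rewrite /g0 /c0 eN /= factS natrM.
  have h1 : (M`!%:R : rat) != 0 by rewrite pnatr_eq0 -lt0n fact_gt0.
  field; rewrite h1 /=.
  by rewrite (_ : 1 + M%:R = M.+1%:R :> rat) ?pnatr_eq0 // mulrSr addrC.
have w1 := smallW (leq_pred K) s1.
have w2 := smallW (leq_pred K) s2.
have w3 := smallW (leq_pred K) s3.
have w4 := smallW (leq_pred K) s4.
have sH : small K.-1 (H * (f * e)).
  rewrite hid hc mul0r addr0.
  repeat match goal with |- small _ (_ + _) => apply: smallD | |- small _ (- _) => apply: smallN end.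
  exact: (smallMl e w1).
  exact: (smallMl f w2).
  exact: (smallMr _ w2).
  exact: (smallMr _ w3).
  exact: (smallMr _ s1').
  exact: (smallMr _ w1).
  exact: (smallMr _ w4).
have nz0 : forall M, (((M`!)%:R)^-1 : rat) != 0.
  by move=> M; rewrite invr_eq0 pnatr_eq0 -lt0n fact_gt0.
have sHf : small K.-1 (H * f).
  apply: (@small_cancel _ _ e); last by rewrite -mulrA.
  by rewrite coef_poly /=.
have sH' : small K.-1 H.
  by apply: (@small_cancel _ _ f) sHf; rewrite coef_poly /=.
have hHn := sH' n (ltnSn n).
have hc0 : B N.-1 0 = 1.
  have := hCe 0%N isT; rewrite coefM big_ord1 !coef_poly /= addn0.
  rewrite /c fact0 divr1 mul1r => h.
  by apply: (mulIf (nz0 N.-1)); rewrite mul1r.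
have hc1 : B N.-1 1 = - (N%:R)^-1.
  have := hCe 1%N isT; rewrite coefM big_ord_recr big_ord1 /= !coef_poly /= addn0 addn1 mul0r.
  rewrite /c hc0 fact0 (_ : 1`! = 1)%N // !divr1 factS prednK; last lia.
  move/eqP; rewrite addrC addr_eq0 => /eqP h.
  apply: (mulIf (nz0 N.-1)); rewrite h natrM invfM; ring.
have hsum : (G^`() * (C - 1))`_n = \sum_(j < n.+1) (b j.+1 *+ j.+1) * (c (n - j)%N - ((n - j)%N == 0)%:R).
  rewrite coefM; apply: eq_bigr => j _; rewrite coef_deriv coefB coef1 !coef_poly.
  have hj := ltn_ord j.
  have -> : (j.+1 < K)%N by lia.
  by have -> : (n - j < K)%N by lia.
have hE : b n - c n - \sum_(j < n.+1) (b j.+1 *+ j.+1) * (c (n - j)%N - ((n - j)%N == 0)%:R) = 0.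
  have hnK : (n < K)%N by lia.
  by rewrite -hsum -[RHS]hHn /H !coefB !coef_poly hnK.
clear hsum hHn sH' sHf sH hid.
have [n' en] : exists n', n = n'.+1 by exists n.-1; lia.
subst n.
rewrite big_ord_recr /= subnn eqxx /c hc0 fact0 divr1 subrr mulr0 addr0 in hE.
rewrite big_ord_recr /= subSnn /= hc1 (_ : 1`! = 1)%N // divr1 subr0 in hE.
set S := \sum_(i < n') _ in hE.
have hT : \sum_(1 <= m < n'.+1) 'C(n'.+1, n'.+1 - m + 1)%:R * B N m * B N.-1 (n'.+1 - m + 1)%N
    = n'.+1`!%:R * S.
  rewrite big_add1 /= big_mkord mulr_sumr; apply: eq_bigr => j _.
  have hj := ltn_ord j.
  rewrite (_ : ((n'.+1 - j)%N == 0) = false); last by lia.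
  rewrite (_ : (n'.+1 - j.+1 + 1 = n'.+1 - j)%N); last by lia.
  rewrite subr0.
  have hm : (n'.+1 - j <= n'.+1)%N by lia.
  have hb := bin_fact hm.
  rewrite (_ : (n'.+1 - (n'.+1 - j) = j)%N) in hb; last by lia.
  rewrite -hb /b factS !natrM -mulr_natr.
  have f1 : ((n'.+1 - j)`!%:R : rat) != 0 by rewrite pnatr_eq0 -lt0n fact_gt0.
  have f2 : (j`!%:R : rat) != 0 by rewrite pnatr_eq0 -lt0n fact_gt0.
  have f3 : (j.+1%:R : rat) != 0 by rewrite pnatr_eq0.
  rewrite -[_ *+ j.+1]mulr_natr; field.
  by rewrite f1 f2 /= (_ : 1 + j%:R = j.+1%:R) // mulrSr addrC.
have hS : S = b n'.+1 - B N.-1 n'.+1 / (n'.+1)`!%:R - b n'.+1 *+ n'.+1 * - N%:R^-1.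
  by apply/eqP; rewrite eq_sym -subr_eq0; apply/eqP; rewrite -[RHS]hE; ring.
have f1 : ((n'.+1)`!%:R : rat) != 0 by rewrite pnatr_eq0 -lt0n fact_gt0.
have f2 : (N%:R : rat) != 0 by rewrite pnatr_eq0 -lt0n; lia.
have f3 : ((N + n'.+1)%:R : rat) != 0 by rewrite pnatr_eq0 -lt0n; lia.
rewrite hT hS /b -mulr_natr; field.
by rewrite f1 f2 /= (_ : N%:R + (1 + n'%:R) = (N + n'.+1)%:R) // natrD mulrSr (addrC n'%:R).
Qed.
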